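(* Let $P:\mathbb{Z}^2\to\mathbb{R}\mathrm{P}^n$ be a Q-net and let $m<n$ be a positive integer. Generically, $\mathcal{L}_A^mP$ is Goursat degenerate if and only if for every $j\in\mathbb{Z}$ the points $\{P_{i,j}\}_{i\in\mathbb{Z}}$ are contained in an $m$-dimensional projective subspace of $\mathbb{R}\mathrm{P}^n$.
   Context: A Q-net is a map $P:\mathbb{Z}^2\to\mathbb{R}\mathrm{P}^n$ such that for all $(i,j)$ the points $P_{i,j},P_{i+1,j},P_{i+1,j+1},P_{i,j+1}$ are coplanar. Laplace transforms: $\mathcal{L}_AP(i,j)=(P_{i,j}\vee P_{i+1,j})\cap(P_{i,j+1}\vee P_{i+1,j+1})$, $\mathcal{L}_BP(i,j)=(P_{i,j}\vee P_{i,j+1})\cap(P_{i+1,j}\vee P_{i+1,j+1})$ ($\vee$ = projective join); these are again Q-nets and $\mathcal{L}_A^m,\mathcal{L}_B^m$ denote iterates. $\mathcal{L}_A^mP$ is called Goursat degenerate if $\mathcal{L}_A^mP(i,j)$ is independent of $i$ (and Laplace degenerate if independent of $j$); $\mathcal{L}_B^mP$ is Goursat degenerate if $\mathcal{L}_B^mP(i,j)$ is independent of $j$ (Laplace degenerate if independent of $i$). ''Generically'' means for data in general position subject to the stated constraints. *)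

(* Defs.v *)
(* Projective space RP^n is modelled by the row spaces of
   (n+1)x(n+1) real matrices (mxalgebra): a point of RP^n is a subspace of
   rank 1, a projective k-dimensional subspace is a subspace of rank k+1,
   the projective join is (_ + _)%MS and the intersection is (_ :&: _)%MS. *)
From HB Require Import structures.
From mathcomp Require Import all_boot all_order all_algebra.
From mathcomp Require Import reals.
Set Implicit Arguments. Unset Strict Implicit. Unset Printing Implicit Defensive.
Import Order.TTheory GRing.Theory Num.Theory.
Local Open Scope ring_scope.

Section Qnets.
Variables (R : realType) (n : nat).

Definition psub := 'M[R]_(n.+1).

Definition net := int -> int -> psub.

Definition is_point (A : psub) : Prop := \rank A = 1%N.

Definition Qnet (P : net) : Prop :=
  forall i j, is_point (P i j) /\
    (\rank (P i j + P (i + 1)%R j + P (i + 1)%R (j + 1)%R + P i (j + 1)%R)%MS <= 3)%N.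

Definition LA (P : net) : net := fun i j =>
  ((P i j + P (i + 1)%R j) :&: (P i (j + 1)%R + P (i + 1)%R (j + 1)%R))%MS.

Definition LB (P : net) : net := fun i j =>
  ((P i j + P i (j + 1)%R) :&: (P (i + 1)%R j + P (i + 1)%R (j + 1)%R))%MS.

Definition LAm (m : nat) (P : net) : net := iter m LA P.

Definition LA_Goursat_degenerate (m : nat) (P : net) : Prop :=
  forall i i' j, (LAm m P i j == LAm m P i' j)%MS.

Definition row_in_proj_subspace (m : nat) (P : net) (j : int) : Prop :=
  exists U : psub, \rank U = m.+1 /\ forall i, (P i j <= U)%MS.

Definition LA_well_defined (m : nat) (P : net) : Prop :=
  forall k, (k < m)%N -> forall i j,
    \rank (LAm k P i j + LAm k P (i + 1)%R j)%MS = 2%N /\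
    \rank (LAm k P i (j + 1)%R + LAm k P (i + 1)%R (j + 1)%R)%MS = 2%N /\
    is_point (LAm k.+1 P i j).

Definition LA_new_points_distinct (m : nat) (P : net) : Prop :=
  forall k, (k < m)%N -> forall i j,
    ~~ (LAm k.+1 P i j == LAm k P i j)%MS /\
    ~~ (LAm k.+1 P i j == LAm k P (i + 1)%R j)%MS.

Definition LA_rows_general (m : nat) (P : net) : Prop :=
  forall k, (k < m)%N -> forall j, ~ (forall V : psub,
    (forall i, (LAm k P i (j + 1)%R <= V)%MS) ->
    (forall i, (LAm k P i j <= V)%MS)).

Definition generic_for_LA (m : nat) (P : net) : Prop :=
  [/\ LA_well_defined m P, LA_new_points_distinct m P & LA_rows_general m P].

End Qnets.

(* Main.v *)
Require Import Defs.
From HB Require Import structures.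
From mathcomp Require Import all_boot all_order all_algebra.
From mathcomp Require Import reals.
From mathcomp Require Import zify.
From Stdlib Require Import Classical.
Import Order.TTheory GRing.Theory Num.Theory.
Local Open Scope ring_scope.

Section Proofs.
Variables (R : realType) (n : nat).
Local Notation psub := (psub R n).

Lemma least_span (S : int -> psub) : exists U : psub,
  (forall i, (S i <= U)%MS) /\ (forall V : psub, (forall i, (S i <= V)%MS) -> (U <= V)%MS).
Proof.
suff H : forall r (U : psub), (\rank U <= r)%N -> (forall i, (S i <= U)%MS) -> exists U : psub,
  (forall i, (S i <= U)%MS) /\ (forall V : psub, (forall i, (S i <= V)%MS) -> (U <= V)%MS).
  by apply: (H n.+1 1%:M) => [|i]; [exact: rank_leq_row | exact: submx1].
elim=> [|r IH] U rU SU.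
  exists U; split=> // V _.
  have /eqP -> : U == 0 by rewrite -mxrank_eq0 -leqn0.
  exact: sub0mx.
destruct (classic (forall V : psub, (forall i, (S i <= V)%MS) -> (U <= V)%MS)) as [HU|HU].
  by exists U.
have [V HV] := not_all_ex_not _ _ HU.
have [SV nUV] := imply_to_and _ _ HV.
apply: (IH (U :&: V)%MS); last by move=> i; rewrite sub_capmx SU SV.
have : (\rank (U :&: V) < \rank U)%N.
  rewrite ltn_neqAle (mxrankS (capmxSl _ _)) andbT.
  apply/negP => /eqP e.
  have [_] := mxrank_leqif_sup (capmxSl U V).
  rewrite e eqxx => /esym; rewrite sub_capmx => /andP[_ ?]; exact: nUV.
move=> h; move: rU; lia.
Qed.

Lemma line_sub (A B X : psub) : \rank (A + B)%MS = 2%N -> \rank B = 1%N -> \rank X = 1%N ->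
  (X <= A + B)%MS -> ~~ (X == B)%MS -> (A <= B + X)%MS.
Proof.
move=> rAB rB rX XAB nXB.
have nXB' : ~~ (X <= B)%MS.
  apply: contra nXB => XB; have [_ <-] := mxrank_leqif_eq XB; by rewrite rX rB.
have sBX : (B + X <= A + B)%MS by rewrite addsmx_sub addsmxSr XAB.
have r2 : \rank (B + X)%MS = 2%N.
  have [le1 e1] := mxrank_leqif_sup (addsmxSl B X).
  have le2 := mxrankS sBX.
  have : \rank B != \rank (B + X)%MS by rewrite e1 addsmx_sub submx_refl.
  move: le1 le2; rewrite rB rAB; lia.
have [_ e2] := mxrank_leqif_sup sBX.
move: e2; rewrite r2 rAB eqxx => /esym AB.
exact: submx_trans (addsmxSl A B) AB.
Qed.

Lemma hLA k (P : net R n) : LAm k (LA P) = LAm k.+1 P.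
Proof. by rewrite /LAm iterSr. Qed.

Lemma fwd m (P : net R n) : (forall i j, is_point (P i j)) -> LA_well_defined m P ->
  LA_new_points_distinct m P -> LA_Goursat_degenerate m P ->
  forall j, exists U : psub, (\rank U <= m.+1)%N /\ forall i, (P i j <= U)%MS.
Proof.
elim: m P => [|m IH] P pts WD ND GD j.
  exists (P 0 j); split; first by rewrite (pts 0 j).
  by move=> i; have /andP[] := GD i 0 j.
have pts' : forall i j, is_point (LA P i j) := fun i j => (WD 0%N isT i j).2.2.
have WD' : LA_well_defined m (LA P).
  by move=> k km i j'; rewrite !hLA; exact: WD k.+1 km i j'.
have ND' : LA_new_points_distinct m (LA P).
  by move=> k km i j'; rewrite !hLA; exact: ND k.+1 km i j'.
have GD' : LA_Goursat_degenerate m (LA P).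
  by move=> i i' j'; rewrite hLA; exact: GD.
have [U [rU SU]] := IH (LA P) pts' WD' ND' GD' j.
have sLA : forall i, (LA P i j <= P i j + P (i + 1)%R j)%MS by move=> i; exact: capmxSl.
have step1 : forall i, (P (i + 1)%R j <= P i j + LA P i j)%MS.
  move=> i; apply: line_sub.
  - by rewrite addsmxC; exact: (WD 0%N isT i j).1.
  - exact: pts.
  - exact: pts'.
  - by rewrite addsmxC.
  - exact: (ND 0%N isT i j).1.
have step2 : forall i, (P i j <= P (i + 1)%R j + LA P i j)%MS.
  move=> i; apply: line_sub.
  - exact: (WD 0%N isT i j).1.
  - exact: pts.
  - exact: pts'.
  - exact: sLA.
  - exact: (ND 0%N isT i j).2.
exists (U + P 0 j)%MS; split.
  have [le _] := mxrank_adds_leqif U (P 0 j).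
  move: le; rewrite (pts 0 j); lia.
have LAU : forall i, (LA P i j <= U + P 0 j)%MS.
  by move=> i; apply: submx_trans (SU i) (addsmxSl _ _).
have pos : forall k : nat, (P k%:Z j <= U + P 0 j)%MS.
  elim=> [|k IHk]; first exact: addsmxSr.
  have -> : (k.+1)%:Z = k%:Z + 1 by rewrite -addn1 PoszD.
  apply: submx_trans (step1 _) _; by rewrite addsmx_sub IHk LAU.
have neg : forall k : nat, (P (- k%:Z) j <= U + P 0 j)%MS.
  elim=> [|k IHk]; first exact: addsmxSr.
  apply: submx_trans (step2 _) _.
  have -> : - (k.+1)%:Z + 1 = - k%:Z by rewrite -addn1 PoszD opprD addrNK.
  by rewrite addsmx_sub IHk LAU.
by case=> k; [exact: pos | rewrite NegzE; exact: neg].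
Qed.

Lemma pad r (U : psub) : (\rank U <= r)%N -> (r <= n.+1)%N ->
  exists U' : psub, \rank U' = r /\ (U <= U')%MS.
Proof.
move=> h1 h2.
suff H : forall d (U : psub), (r - \rank U)%N = d -> (\rank U <= r)%N ->
  exists U' : psub, \rank U' = r /\ (U <= U')%MS by exact: H.
elim=> [|d IH] V e hV.
  by exists V; split; [lia | exact: submx_refl].
have n1 : ~~ (1%:M <= V)%MS.
  apply/negP => /mxrankS; rewrite mxrank1; lia.
have : ~~ [forall i, row i (1%:M : psub) <= V]%MS.
  apply: contra n1 => /forallP h; apply/row_subP => i; exact: h i.
case/forallPn => i Hi.
set W := (V + row i (1%:M : psub))%MS.
have rW : \rank W = (\rank V).+1.
  have [le _] := mxrank_adds_leqif V (row i (1%:M : psub)).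
  have := rank_leq_row (row i (1%:M : psub)).
  have [le1 e1] := mxrank_leqif_sup (addsmxSl V (row i (1%:M : psub))).
  have : \rank V != \rank W by rewrite e1 addsmx_sub submx_refl.
  move: le le1; rewrite -/W; lia.
have [U' [rU' WU']] := IH W ltac:(lia) ltac:(lia).
by exists U'; split=> //; apply: submx_trans (addsmxSl _ _) WU'.
Qed.

Lemma bwd m (P : net R n) : (0 < m)%N -> LA_well_defined m P -> LA_rows_general m P ->
  (forall j, row_in_proj_subspace m P j) -> LA_Goursat_degenerate m P.
Proof.
move=> m0 WD G3 rows.
have claim : forall k, (k <= m)%N -> forall j, exists S : psub,
  [/\ (forall i, (LAm k P i j <= S)%MS),
      (forall V : psub, (forall i, (LAm k P i j <= V)%MS) -> (S <= V)%MS) &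
      (\rank S + k <= m.+1)%N].
  elim=> [|k IH] km j.
    have [S [S1 S2]] := least_span (fun i => P i j).
    have [U [rU SU]] := rows j.
    exists S; split=> //; have := mxrankS (S2 U SU); rewrite rU addn0 //.
  have [S1 [a1 b1 c1]] := IH (ltnW km) j.
  have [S2 [a2 b2 c2]] := IH (ltnW km) (j + 1).
  have [T [T1 T2]] := least_span (fun i => LAm k.+1 P i j).
  have TS : (T <= S1 :&: S2)%MS.
    apply: T2 => i; rewrite /LAm iterS -/(LAm k P) /LA sub_capmx; apply/andP; split.
      apply: submx_trans (capmxSl _ _) _; by rewrite addsmx_sub !a1.
    apply: submx_trans (capmxSr _ _) _; by rewrite addsmx_sub !a2.
  have lt : (\rank (S1 :&: S2)%MS < \rank S1)%N.
    rewrite ltn_neqAle (mxrankS (capmxSl _ _)) andbT.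
    apply/negP => /eqP e.
    have [_] := mxrank_leqif_sup (capmxSl S1 S2).
    rewrite e eqxx => /esym; rewrite sub_capmx => /andP[_ S12].
    apply: (G3 k km j) => V hV i.
    exact: submx_trans (a1 i) (submx_trans S12 (b2 V hV)).
  exists T; split=> //.
  have := mxrankS TS; move: c1 lt; lia.
case: m m0 WD G3 rows claim => // m' _ WD G3 rows claim.
move=> i i' j.
have [S [a _ c]] := claim m'.+1 (leqnn _) j.
have eqS : forall i, (LAm m'.+1 P i j == S)%MS.
  move=> i0; have [le e] := mxrank_leqif_eq (a i0).
  rewrite -e; have pt : \rank (LAm m'.+1 P i0 j) = 1%N := (WD m' (ltnSn _) i0 j).2.2.
  move: le c; rewrite pt; lia.
have /andP[x1 x2] := eqS i; have /andP[y1 y2] := eqS i'.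
by apply/andP; split; [exact: submx_trans x1 y2 | exact: submx_trans y1 x2].
Qed.

End Proofs.

Theorem proposition2p2 (R : realType) (n m : nat) (P : net R n) :
  Qnet P -> (0 < m)%N -> (m < n)%N ->
  generic_for_LA m P ->
  (LA_Goursat_degenerate m P <-> forall j : int, row_in_proj_subspace m P j).
Proof.
move=> Q m0 mn [WD ND G3]; split.
  move=> GD j.
  have pts : forall i j, is_point (P i j) := fun i j => (Q i j).1.
  have [U [rU SU]] := @fwd R n m P pts WD ND GD j.
  have [U' [rU' UU']] := @pad R n m.+1 U rU (ltnW mn : (m.+1 <= n.+1)%N).
  by exists U'; split=> // i; exact: submx_trans (SU i) UU'.
exact: bwd.
Qed.
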